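(* Let $\mu>0$ and let $\mathcal{D}'_\mu$ be the class of random variables $D$ that are mixed Poisson$(X)$ with $\mathbb{P}(X=\lambda)=1-\mathbb{P}(X=0)=\mu/\lambda$ for some $\lambda\ge\mu$. Over $D\in\mathcal{D}'_\mu$, $q_D$ is minimized for $\lambda=\max(\mu,\mu_c)$, where $\mu_c$ is the largest real root of $2x=e^{x-1/2}$ ($\mu_c\approx1.756$).
   Context: For a non-negative real random variable $X$, $D$ is mixed Poisson$(X)$ if $\mathbb{P}(D=k)=\mathbb{E}(X^ke^{-X}/k!)$, $k\ge0$; its generating function is $f_D(s)=\mathbb{E}(e^{-(1-s)X})$ and $\bar f_D(s)=\mathbb{E}(Xe^{-(1-s)X})/\mathbb{E}(X)$. $z_D$ is the smallest root in $[0,1]$ of $s=\bar f_D(s)$ and $q_D=f_D(z_D)$. For $D$ in $\mathcal{D}'_\mu$ with parameter $\lambda$: $f_D(s)=1-\mu/\lambda+(\mu/\lambda)e^{-\lambda(1-s)}$ and $\bar f_D(s)=e^{-\lambda(1-s)}$. *)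

(* Defs.v *)
From Stdlib Require Import Reals Lra.
Open Scope R_scope.

(* For D in D'_mu with parameter lam (mixed Poisson(X), P(X=lam)=mu/lam,
   P(X=0)=1-mu/lam), the generating function f_D and the size-biased
   generating function bar f_D, as given in the paper. *)
Definition fD (mu lam s : R) : R := 1 - mu / lam + (mu / lam) * exp (- lam * (1 - s)).
Definition fbarD (lam s : R) : R := exp (- lam * (1 - s)).

Definition is_zD (lam z : R) : Prop :=
  0 <= z <= 1 /\ z = fbarD lam z /\
  (forall s, 0 <= s <= 1 -> s = fbarD lam s -> z <= s).

Definition qD (mu lam z : R) : R := fD mu lam z.

Definition is_mu_c (m : R) : Prop :=
  2 * m = exp (m - 1/2) /\ (forall x, 2 * x = exp (x - 1/2) -> x <= m).

(* Main.v *)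
Require Import Defs.
From Stdlib Require Import Reals Lra.
Open Scope R_scope.

Definition gfun (w : R) : R := (1 - exp (- w)) * (1 - exp (- w)) / w.
Definition gp (c : R) : R := (1 - exp (- c)) * exp (- c) * (1 + 2 * c - exp c) / (c * c).
Definition Lfun (w : R) : R := w / (1 - exp (- w)).
Definition Lp (c : R) : R := (1 - exp (- c) - c * exp (- c)) / ((1 - exp (- c)) * (1 - exp (- c))).

Lemma dl_ext f x l l' : derivable_pt_lim f x l -> l = l' -> derivable_pt_lim f x l'.
Proof. intros H ->; exact H. Qed.

Lemma d_em c : derivable_pt_lim (fun w => exp (- w)) c (- exp (- c)).
Proof.
  apply dl_ext with (exp (- c) * (-1)); [|ring].
  apply (derivable_pt_lim_comp (fun w => - w) exp c (-1) (exp (- c))).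
  - exact (derivable_pt_lim_opp id c 1 (derivable_pt_lim_id c)).
  - exact (derivable_pt_lim_exp (- c)).
Qed.

Lemma d_u c : derivable_pt_lim (fun w => 1 - exp (- w)) c (exp (- c)).
Proof.
  apply dl_ext with (0 - - exp (- c)); [|ring].
  exact (derivable_pt_lim_minus (fct_cte 1) (fun w => exp (- w)) c 0 _
           (derivable_pt_lim_const 1 c) (d_em c)).
Qed.

Lemma em_lt1 c : 0 < c -> exp (- c) < 1.
Proof. intros; rewrite <- exp_0; apply exp_increasing; lra. Qed.

Lemma d_g c : 0 < c -> derivable_pt_lim gfun c (gp c).
Proof.
  intros Hc.
  pose proof (derivable_pt_lim_mult _ _ c _ _ (d_u c) (d_u c)) as Hm.
  pose proof (derivable_pt_lim_div _ id c _ _ Hm (derivable_pt_lim_id c)) as Hd.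
  assert (Hne : id c <> 0) by (unfold id; lra).
  specialize (Hd Hne).
  eapply dl_ext. exact Hd.
  unfold gp, mult_fct, id, Rsqr. rewrite exp_Ropp.
  assert (exp c <> 0) by (apply Rgt_not_eq, exp_pos).
  field. lra.
Qed.

Lemma d_L c : 0 < c -> derivable_pt_lim Lfun c (Lp c).
Proof.
  intros Hc.
  assert (Hne : 1 - exp (- c) <> 0) by (pose proof (em_lt1 c Hc); lra).
  pose proof (derivable_pt_lim_div id _ c _ _ (derivable_pt_lim_id c) (d_u c) Hne) as Hd.
  eapply dl_ext. exact Hd.
  unfold Lp, id, Rsqr. field. exact Hne.
Qed.

Lemma Lp_pos c : 0 < c -> 0 < Lp c.
Proof.
  intros Hc. unfold Lp.
  pose proof (em_lt1 c Hc).
  pose proof (exp_ineq1 c ltac:(lra)).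
  assert (Hec : exp (- c) * exp c = 1) by (rewrite <- exp_plus; replace (- c + c) with 0 by ring; apply exp_0).
  pose proof (exp_pos (- c)).
  apply Rdiv_lt_0_compat; [|nra].
  nra.
Qed.

Lemma L_strict a b : 0 < a -> a < b -> Lfun a < Lfun b.
Proof.
  intros Ha Hab.
  destruct (MVT_cor2 Lfun Lp a b Hab) as [c [Hc1 Hc2]].
  { intros c Hc; apply d_L; lra. }
  pose proof (Lp_pos c ltac:(lra)). nra.
Qed.

Lemma L_le a b : 0 < a -> 0 < b -> Lfun a <= Lfun b -> a <= b.
Proof.
  intros Ha Hb H. destruct (Rle_or_lt a b) as [|Hlt]; auto.
  pose proof (L_strict b a Hb Hlt); lra.
Qed.

Definition chi (w : R) : R := 1 + 2 * w - exp w.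

Lemma d_chi c : derivable_pt_lim chi c (2 - exp c).
Proof.
  apply dl_ext with (0 + 2 * 1 - exp c); [|ring].
  apply (derivable_pt_lim_minus (fun w => 1 + 2 * w) exp c (0 + 2 * 1) (exp c)).
  - apply (derivable_pt_lim_plus (fct_cte 1) (fun w => 2 * w) c 0 (2 * 1)).
    + apply derivable_pt_lim_const.
    + apply (derivable_pt_lim_scal id 2 c 1 (derivable_pt_lim_id c)).
  - apply derivable_pt_lim_exp.
Qed.

Lemma chi0 : chi 0 = 0.
Proof. unfold chi; rewrite exp_0; ring. Qed.

Lemma chi_pos wc w : chi wc = 0 -> 0 < w < wc -> 0 < chi w.
Proof.
  intros Hwc Hw.
  destruct (MVT_cor2 chi (fun c => 2 - exp c) 0 w ltac:(lra)) as [c1 [H1 H1']].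
  { intros; apply d_chi. }
  destruct (MVT_cor2 chi (fun c => 2 - exp c) w wc ltac:(lra)) as [c2 [H2 H2']].
  { intros; apply d_chi. }
  rewrite chi0 in H1. rewrite Hwc in H2.
  assert (exp c1 < exp c2) by (apply exp_increasing; lra).
  destruct (Rlt_or_le 0 (chi w)) as [|Hn]; auto.
  assert (2 - exp c1 <= 0).
  { destruct (Rle_or_lt (2 - exp c1) 0); auto. assert (0 < (2 - exp c1) * (w - 0)) by (apply Rmult_lt_0_compat; lra). lra. }
  assert ((2 - exp c2) * (wc - w) < 0) by (apply Rmult_neg_pos ; lra).
  lra.
Qed.

Lemma chi_neg wc w : 0 < wc -> chi wc = 0 -> wc < w -> chi w < 0.
Proof.
  intros Hp Hwc Hw.
  destruct (MVT_cor2 chi (fun c => 2 - exp c) 0 wc Hp) as [c1 [H1 H1']].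
  { intros; apply d_chi. }
  destruct (MVT_cor2 chi (fun c => 2 - exp c) wc w Hw) as [c2 [H2 H2']].
  { intros; apply d_chi. }
  rewrite chi0, Hwc in H1. rewrite Hwc in H2.
  assert (exp c1 < exp c2) by (apply exp_increasing; lra).
  assert (2 - exp c1 = 0).
  { assert ((2 - exp c1) * (wc - 0) = 0) by lra. apply Rmult_integral in H0; lra. }
  assert ((2 - exp c2) * (w - wc) < 0) by (apply Rmult_neg_pos ; lra).
  lra.
Qed.

Lemma gp_sign c : 0 < c -> (0 < chi c -> 0 < gp c) /\ (chi c < 0 -> gp c < 0).
Proof.
  intros Hc. unfold gp. fold (chi c).
  pose proof (em_lt1 c Hc). pose proof (exp_pos (- c)).
  assert (0 < (1 - exp (- c)) * exp (- c)) by nra.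
  assert (0 < c * c) by nra.
  split; intro.
  - apply Rdiv_lt_0_compat; nra.
  - unfold Rdiv. assert (0 < / (c * c)) by (apply Rinv_0_lt_compat; lra).
    apply Rmult_neg_pos; [|lra]. rewrite Rmult_comm. apply Rmult_neg_pos; lra.
Qed.

Lemma g_inc wc a b : chi wc = 0 -> 0 < a -> a <= b -> b <= wc -> gfun a <= gfun b.
Proof.
  intros Hwc Ha Hab Hb. destruct (Req_dec a b) as [->|Hne]; [lra|].
  destruct (MVT_cor2 gfun gp a b ltac:(lra)) as [c [H1 H2]].
  { intros; apply d_g; lra. }
  pose proof (chi_pos wc c Hwc ltac:(lra)).
  destruct (gp_sign c ltac:(lra)) as [Hp _]. specialize (Hp H). nra.
Qed.

Lemma g_dec wc a b : 0 < wc -> chi wc = 0 -> wc <= a -> a <= b -> gfun b <= gfun a.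
Proof.
  intros Hp Hwc Ha Hab. destruct (Req_dec a b) as [->|Hne]; [lra|].
  destruct (MVT_cor2 gfun gp a b ltac:(lra)) as [c [H1 H2]].
  { intros; apply d_g; lra. }
  pose proof (chi_neg wc c Hp Hwc ltac:(lra)).
  destruct (gp_sign c ltac:(lra)) as [_ Hn]. specialize (Hn H). nra.
Qed.

Lemma muc_gt1 m : is_mu_c m -> 1 < m.
Proof.
  intros [Hm Hmax].
  set (f := fun x => exp (x - 1/2) - 2 * x).
  assert (Hc : continuity f) by (unfold f; reg).
  assert (H1 : f 1 < 0).
  { unfold f. replace (1 - 1/2) with (1/2) by field.
    assert (exp (1/2) * exp (1/2) = exp 1) by (rewrite <- exp_plus; f_equal; field).
    pose proof exp_le_3. pose proof (exp_pos (1/2)). nra. }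
  assert (H5 : 0 < f 5).
  { unfold f. replace (5 - 1/2) with (9/4 + 9/4) by field. rewrite exp_plus.
    pose proof (exp_ineq1_le (9/4)). nra. }
  destruct (IVT f 1 5 Hc ltac:(lra) H1 H5) as [r [Hr Hfr]].
  assert (r <> 1) by (intro; subst; lra).
  assert (2 * r = exp (r - 1/2)) by (unfold f in Hfr; lra).
  pose proof (Hmax r H0). lra.
Qed.

Lemma z_one lam z : 0 < lam -> lam <= 1 -> is_zD lam z -> z = 1.
Proof.
  intros Hl Hl1 [[Hz0 Hz1] [Hfix _]].
  destruct (Req_dec z 1) as [|Hne]; auto.
  unfold fbarD in Hfix.
  assert (- lam * (1 - z) <> 0) by (intro; assert (lam * (1 - z) = 0) by lra; apply Rmult_integral in H0; lra).
  pose proof (exp_ineq1 _ H). nra.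
Qed.

Lemma z_lt1 lam z : 1 < lam -> is_zD lam z -> z < 1.
Proof.
  intros Hl [_ [_ Hmin]].
  set (t := (lam - 1) / (2 * lam)).
  assert (Ht : 0 < t < 1/2).
  { unfold t; split; [apply Rdiv_lt_0_compat; lra|].
    apply Rmult_lt_reg_r with (2 * lam); [lra|]. field_simplify; lra. }
  assert (Hlt : lam * t = (lam - 1) / 2) by (unfold t; field; lra).
  set (h := fun s => s - exp (- lam * (1 - s))).
  assert (Hc : continuity h) by (unfold h; reg).
  assert (H0 : h 0 < 0) by (unfold h; pose proof (exp_pos (- lam * (1 - 0))); lra).
  assert (H1 : 0 < h (1 - t)).
  { unfold h. replace (- lam * (1 - (1 - t))) with (- (lam * t)) by ring.
    rewrite exp_Ropp. pose proof (exp_ineq1_le (lam * t)).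
    pose proof (exp_pos (lam * t)).
    assert (1 < (1 - t) * exp (lam * t)) by nra.
    assert (/ exp (lam * t) * exp (lam * t) = 1) by (field; lra).
    nra. }
  destruct (IVT h 0 (1 - t) Hc ltac:(lra) H0 H1) as [s [Hs Hhs]].
  assert (s <= 1 - t) by lra.
  assert (z <= s). { apply Hmin; [lra|]. unfold fbarD; unfold h in Hhs; lra. }
  lra.
Qed.

Lemma param mu lam z : 1 < lam -> is_zD lam z ->
  exists w, 0 < w /\ lam = Lfun w /\ qD mu lam z = 1 - mu * gfun w.
Proof.
  intros Hl Hz.
  pose proof (z_lt1 lam z Hl Hz) as Hz1.
  destruct Hz as [[Hz0 _] [Hfix _]]. unfold fbarD in Hfix.
  exists (lam * (1 - z)). split; [nra|].
  assert (He : exp (- (lam * (1 - z))) = z) by (rewrite Hfix at 2; f_equal; ring).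
  split.
  - unfold Lfun. rewrite He. field. lra.
  - unfold qD, fD, gfun. rewrite He. rewrite <- Hfix. field. split; lra.
Qed.

Theorem lemma3p5 (mu : R) (hmu : 0 < mu) (muc : R) (hmuc : is_mu_c muc)
  (zstar : R) (hzstar : is_zD (Rmax mu muc) zstar) :
  forall (lam z : R), mu <= lam -> is_zD lam z ->
    qD mu (Rmax mu muc) zstar <= qD mu lam z.
Proof.
  intros lam z Hml Hz.
  pose proof (muc_gt1 muc hmuc) as Hc1.
  assert (Hls : muc <= Rmax mu muc) by apply Rmax_r.
  assert (Hls' : mu <= Rmax mu muc) by apply Rmax_l.
  destruct (param mu (Rmax mu muc) zstar ltac:(lra) hzstar) as [ws [Hws [HLs Hqs]]].
  rewrite Hqs.
  assert (Hgs : 0 <= gfun ws).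
  { unfold gfun. apply Rmult_le_pos; [pose proof (Rle_0_sqr (1 - exp (- ws))); unfold Rsqr in *; lra|]. left; apply Rinv_0_lt_compat; lra. }
  destruct (Rle_or_lt lam 1) as [Hl1|Hl1].
  - rewrite (z_one lam z ltac:(lra) Hl1 Hz). unfold qD, fD.
    replace (- lam * (1 - 1)) with 0 by ring. rewrite exp_0.
    assert (0 <= mu * gfun ws) by nra.
    replace (1 - mu / lam + mu / lam * 1) with 1 by (field; lra). lra.
  - destruct (param mu _ _ Hl1 Hz) as [w [Hw [HL Hq]]]. rewrite Hq.
    destruct hmuc as [Hmc _].
    pose (wc := muc - 1/2).
    assert (Hwc : 0 < wc) by (unfold wc; lra).
    assert (Hchi : chi wc = 0).
    { unfold chi, wc. rewrite <- Hmc. lra. }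
    assert (HLc : Lfun wc = muc).
    { unfold Lfun, wc. rewrite exp_Ropp.
      replace (- (muc - 1/2)) with (- (muc - 1/2)) by ring.
      rewrite <- Hmc. field. lra. }
    assert (Hgoal : gfun w <= gfun ws).
    { destruct (Rle_or_lt (Rmax mu muc) lam) as [Hle|Hlt].
      - assert (ws <= w) by (apply L_le; lra).
        assert (wc <= ws) by (apply L_le; lra).
        apply (g_dec wc); auto.
      - assert (Rmax mu muc = muc).
        { unfold Rmax in *. destruct (Rle_dec mu muc); lra. }
        assert (ws = wc) by (apply Rle_antisym; apply L_le; lra).
        subst ws.
        destruct (Rle_or_lt w wc).
        + apply (g_inc wc); auto; lra.
        + apply (g_dec wc); auto; lra. }
    nra.
Qed.
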